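(* Fix a sequence of matchings and any non-negative load vector $x^{(t_1)}$ at the end of round $t_1$, and let $\mathcal{T}$ be the set of all tokens. Let $D\subseteq V$ and $t_2 > t_1$. Then the random variable $Z:= \sum_{i \in \mathcal{T}} \mathbf{1}_{w_i^{(t_2)} \in D} = \sum_{u \in D} x_u^{(t_2)}$ satisfies, for any $\delta > 0$, \[ \Pr[ Z \geq (1+\delta) \mathbb{E}[Z] ] \leq \left( \frac{\mathrm{e}^{\delta}}{(1+\delta)^{1+\delta}} \right)^{\mathbb{E}[Z]}. \]
   Context: Token-based description of the discrete load balancing protocol on a graph $G=(V,E)$ with matchings $\mathbf{M}^{(t)}\subseteq E$ used in round $t$: tokens are distinguishable; $w^{(t)}_i$ is the node holding token $i$ at the end of round $t$, $x^{(t)}_u$ the number of tokens at $u$. If $u,v$ are matched in round $t$, all tokens at $u$ and $v$ are put in an urn; with probability $1/2$ node $u$ draws $\lceil (x^{(t-1)}_u+x^{(t-1)}_v)/2\rceil$ tokens uniformly at random without replacement, otherwise $\lfloor (x^{(t-1)}_u+x^{(t-1)}_v)/2\rfloor$ (independently over matched edges and rounds); $v$ gets the rest. Unmatched nodes keep their tokens. *)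

(* Defs.v *)
From HB Require Import structures.
From mathcomp Require Import all_boot all_order all_algebra.
From mathcomp Require Import reals sequences exp.
Set Implicit Arguments. Unset Strict Implicit. Unset Printing Implicit Defensive.
Import Order.TTheory GRing.Theory Num.Theory.
Local Open Scope ring_scope.

Section Defs.
Variables (R : realType) (V Tok : finType).

(* A matching is given by its "mate" function: mate u = u iff u is unmatched,
   otherwise {u, mate u} is a matched edge of the graph e. *)
Definition is_matching (e : rel V) (mate : V -> V) : Prop :=
  forall u, mate (mate u) = u /\ (mate u != u -> e u (mate u)).

(* Probability that, in the matched edge {u, mate u}, node u ends up holding
   exactly the set of tokens { i | w i in {u,v} and w' i = u } (state w -> w'). *)
Definition edge_prob (mate : V -> V) (w w' : {ffun Tok -> V}) (u : V) : R :=
  let v := mate u in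
  let x := #|[set i | (w i == u) || (w i == v)]| in
  let k := #|[set i | ((w i == u) || (w i == v)) && (w' i == u)]| in
  ((2%:R)^-1 * (k == uphalf x)%:R + (2%:R)^-1 * (k == x./2)%:R) / ('C(x, k))%:R.

(* Unmatched nodes keep their tokens; tokens of a matched edge {u,v} are
   redistributed between u and v; edges are independent. Each matched edge is
   counted once (from its endpoint with smaller enum_rank). *)
Definition step (mate : V -> V) (w w' : {ffun Tok -> V}) : R :=
  if [forall i, if mate (w i) == w i then w' i == w i
                else (w' i == w i) || (w' i == mate (w i))]
  then \prod_(u | (enum_rank u < enum_rank (mate u))%N) edge_prob mate w w' u
  else 0.

(* Distribution of the token positions after k rounds following round t1,
   starting from the deterministic configuration w0 at the end of round t1;
   round t uses matching M t. *)
Fixpoint dist (M : nat -> V -> V) (t1 : nat) (w0 : {ffun Tok -> V}) (k : nat)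
  : {ffun Tok -> V} -> R :=
  match k with
  | 0 => fun w => (w == w0)%:R
  | k'.+1 => fun w' => \sum_w dist M t1 w0 k' w * step (M (t1 + k'.+1)%N) w w'
  end.

Definition Zcount (D : {set V}) (w : {ffun Tok -> V}) : nat :=
  #|[set i | w i \in D]|.

Definition expectZ (M : nat -> V -> V) t1 w0 k (D : {set V}) : R :=
  \sum_w dist M t1 w0 k w * (Zcount D w)%:R.

Definition probZge (M : nat -> V -> V) t1 w0 k (D : {set V}) (a : R) : R :=
  \sum_(w | a <= (Zcount D w)%:R) dist M t1 w0 k w.

End Defs.

(* Main.v *)
Require Import Defs.
From HB Require Import structures.
From mathcomp Require Import all_boot all_order all_algebra.
From mathcomp Require Import reals sequences exp.
From mathcomp Require Import ring lra.
Import Order.TTheory GRing.Theory Num.Theory.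
Local Open Scope ring_scope.
Set Implicit Arguments. Unset Strict Implicit. Unset Printing Implicit Defensive.


Lemma upfl x : (uphalf x + x./2)%N = x.
Proof. by rewrite uphalf_half -addnA addnn odd_double_half. Qed.

Lemma prod_const_pred (R : realType) (T : finType) (P : pred T) (c : R) :
  \prod_(i | P i) c = c ^+ #|P|.
Proof. by rewrite prodr_const. Qed.

Lemma sum_const_pred (R : realType) (T : finType) (P : pred T) (c : R) :
  \sum_(i | P i) c = c *+ #|P|.
Proof. by rewrite sumr_const. Qed.

Lemma sum_ind (R : realType) (F : nat -> R) n c : (c <= n)%N ->
  \sum_(k < n.+1) (k == c :> nat)%:R * F k = F c.
Proof.
move=> cn; rewrite (bigD1 (Ordinal (cn : c < n.+1)%N)) //= eqxx mul1r.
rewrite big1 ?addr0 // => k hk; rewrite (_ : (k == c :> nat) = false) ?mul0r //.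
by apply/negbTE; apply: contra hk => /eqP e; apply/eqP; exact: val_inj.
Qed.

Lemma half_same (R : realType) (a : R) : (a + a) / 2 = a.
Proof. by rewrite -mulr2n -(mulr_natr a 2) mulfK // pnatr_eq0. Qed.

Lemma amgm2 (R : realType) (a b : R) : a * b <= ((a+b)/2)^+2.
Proof.
have h := sqr_ge0 (a - b); rewrite -subr_ge0.
have -> : ((a+b)/2)^+2 - a*b = (a-b)^+2 / 4 by field.
by rewrite divr_ge0.
Qed.

Lemma pow_aux (R : realType) (a b : R) (o : bool) h : 0 <= a -> 0 <= b ->
  (a ^+ (o + h) * b ^+ h + a ^+ h * b ^+ (o + h)) / 2 <= ((a + b) / 2) ^+ (o + h + h).
Proof.
move=> a0 b0; set s := (a + b) / 2.
have s0 : 0 <= s by rewrite /s divr_ge0 ?addr_ge0.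
have pm : (a * b) ^+ h <= (s ^+ 2) ^+ h.
  apply: lerXn2r; [by rewrite nnegrE mulr_ge0 | by rewrite nnegrE exprn_ge0 | exact: amgm2].
have E : s ^+ (o + h + h) = s ^+ o * (s ^+ 2) ^+ h.
  by rewrite -exprM -exprD mul2n -addnn addnA.
rewrite E; clear E; case: o.
  rewrite !exprD !expr1.
  have -> : (a * a ^+ h * b ^+ h + a ^+ h * (b * b ^+ h)) / 2 = (a * b) ^+ h * s.
    by rewrite exprMn /s; field.
  by rewrite mulrC ler_wpM2l.
rewrite !add0n expr0 mul1r.
have -> : (a ^+ h * b ^+ h + a ^+ h * b ^+ h) / 2 = (a * b) ^+ h.
  by rewrite half_same exprMn.
exact: pm.
Qed.

Lemma pow_ineq (R : realType) (a b : R) x : 0 <= a -> 0 <= b ->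
  (a ^+ uphalf x * b ^+ (x - uphalf x) + a ^+ x./2 * b ^+ (x - x./2)) / 2
    <= ((a + b) / 2) ^+ x.
Proof.
move=> a0 b0.
have hx : (odd x + x./2 + x./2 = x)%N by rewrite -addnA addnn odd_double_half.
have := pow_aux (odd x) (x./2) a0 b0; rewrite hx uphalf_half.
have E1 : (x - (odd x + x./2) = x./2)%N by rewrite -[X in (X - _)%N]hx addKn.
have E2 : (x - x./2 = odd x + x./2)%N by rewrite -[X in (X - _)%N]hx addnK.
by rewrite E1 E2.
Qed.

Definition Pf (R : realType) (V : finType) (m : V -> V) (f : V -> R) (u : V) : R :=
  (f u + f (m u)) / 2.

Section Step.
Variables (R : realType) (V Tok : finType) (m : V -> V).
Hypothesis mK : forall u, m (m u) = u.
Variable w : {ffun Tok -> V}.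

Definition isrep u := (enum_rank u < enum_rank (m u))%N.
Definition rep u := if isrep u then u else m u.
Definition key i := rep (w i).
Definition okv i (v : V) := (v == w i) || (v == m (w i)).
Definition allowed (w' : {ffun Tok -> V}) := [forall i, okv i (w' i)].
Definition Pk r (w' : {ffun Tok -> V}) :=
  [forall i, if key i == r then okv i (w' i) else w' i == w i].
Definition Pin (s : seq V) (w' : {ffun Tok -> V}) :=
  [forall i, if key i \in s then okv i (w' i) else w' i == w i].

Lemma isrep_neq r : isrep r -> m r != r.
Proof. by rewrite /isrep; apply: contraTneq => ->; rewrite ltnn. Qed.

Lemma key_rep i r : isrep r -> (key i == r) = (w i == r) || (w i == m r).
Proof.
move=> hr; rewrite /key /rep.
case: (boolP (isrep (w i))) => hw.
  apply/idP/idP; first by move=> ->.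
  case/orP=> /eqP E //; move: hw; rewrite E /isrep mK => h.
  by move: hr; rewrite /isrep ltnNge (ltnW h).
apply/idP/idP.
  by move/eqP=> <-; rewrite mK eqxx orbT.
case/orP=> /eqP E.
  by move: hw; rewrite E hr.
by rewrite E mK.
Qed.

Lemma nonrep_fix i : ~~ isrep (key i) -> m (w i) = w i.
Proof.
rewrite /key /rep; case: (boolP (isrep (w i))) => hw; first by rewrite hw.
rewrite /isrep mK => h; apply: enum_rank_inj; apply: val_inj; apply/eqP.
by rewrite /= eqn_leq; apply/andP; split; rewrite leqNgt.
Qed.

Section Factor.
Variable F : V -> {ffun Tok -> V} -> R.
Hypothesis Floc : forall r (w1 w2 : {ffun Tok -> V}), (forall i, key i = r -> w1 i = w2 i) -> F r w1 = F r w2.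

Lemma factor_seq s : uniq s ->
  \sum_(w' | Pin s w') \prod_(r <- s) F r w' = \prod_(r <- s) \sum_(w' | Pk r w') F r w'.
Proof.
elim: s => [_|r0 s IH] /=.
  rewrite big_nil (big_pred1 w) ?big_nil // => w'.
  rewrite /Pin /=; apply/forallP/eqP => [H|->//].
  by apply/ffunP=> i; apply/eqP; have := H i.
case/andP=> r0s us; rewrite big_cons -IH //.
under eq_bigr do rewrite big_cons.
rewrite [RHS]big_distrl /=.
under [RHS]eq_bigr do rewrite big_distrr /=.
rewrite pair_big_dep /=.
pose mg (p : {ffun Tok -> V} * {ffun Tok -> V}) :=
  [ffun i => if key i == r0 then p.1 i else p.2 i].
pose sp (w' : {ffun Tok -> V}) :=
  ([ffun i => if key i == r0 then w' i else w i],
   [ffun i => if key i == r0 then w i else w' i]).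
rewrite (reindex_onto mg sp); last first.
  by move=> w' _; apply/ffunP=> i; rewrite /mg /sp !ffunE; case: (key i == r0).
apply: eq_big => [[p1 p2]|[p1 p2]]; rewrite /mg /sp /=.
  apply/idP/idP.
    case/andP=> /forallP H1 /eqP [H2 H3]; apply/andP; split; apply/forallP=> i.
      case: ifP => ki.
        by have := H1 i; rewrite inE ki /= !ffunE ki.
      by move/ffunP: H2 => /(_ i); rewrite !ffunE ki => <-.
    case: ifP => kis.
      have kr : (key i == r0) = false.
        by apply/negbTE; apply: contraNneq r0s => <-.
      by have := H1 i; rewrite inE kis orbT !ffunE kr.
    case: (boolP (key i == r0)) => kr.
      by move/ffunP: H3 => /(_ i); rewrite !ffunE kr => <-.
    by have := H1 i; rewrite inE (negbTE kr) kis !ffunE (negbTE kr).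
  case/andP=> /forallP H1 /forallP H2; apply/andP; split.
    apply/forallP=> i; rewrite inE !ffunE; case: (boolP (key i == r0)) => kr /=.
      by have := H1 i; rewrite kr.
    by have := H2 i.
  apply/eqP; congr pair; apply/ffunP=> i; rewrite !ffunE.
    case: (boolP (key i == r0)) => kr //.
    by have := H1 i; rewrite (negbTE kr) => /eqP.
  case: (boolP (key i == r0)) => kr //.
  have kis : (key i \in s) = false.
    by apply/negbTE; move/eqP: kr => ->.
  by have := H2 i; rewrite kis => /eqP.
move=> _.
congr (_ * _).
  by apply: Floc => i ki; rewrite ffunE ki eqxx.
rewrite big_seq_cond [RHS]big_seq_cond; apply: eq_bigr => r /andP [rs _].
apply: Floc => i ki; rewrite ffunE; case: ifP => // /eqP E.
by move: r0s; rewrite -E ki rs.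
Qed.

Lemma factor :
  \sum_(w' | allowed w') \prod_r F r w' = \prod_r \sum_(w' | Pk r w') F r w'.
Proof.
rewrite -factor_seq ?index_enum_uniq //; apply: eq_bigl => w'.
by apply: eq_forallb => i; rewrite mem_index_enum.
Qed.
End Factor.

Definition pr r (w' : {ffun Tok -> V}) : R := if isrep r then edge_prob R m w w' r else 1.
Definition G r := [set i | (w i == r) || (w i == m r)].
Definition kk r (w' : {ffun Tok -> V}) :=
  #|[set i | ((w i == r) || (w i == m r)) && (w' i == r)]|.

Lemma step_eq w' : step R m w w' = if allowed w' then \prod_r pr r w' else 0.
Proof.
rewrite /step.
have -> : [forall i, if m (w i) == w i then w' i == w i
                else (w' i == w i) || (w' i == m (w i))] = allowed w'.
  by apply: eq_forallb => i; rewrite /okv; case: eqP => [->|]; rewrite ?orbb.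
case: allowed => //.
by rewrite big_mkcond.
Qed.

Lemma pr_loc r (w1 w2 : {ffun Tok -> V}) :
  (forall i, key i = r -> w1 i = w2 i) -> pr r w1 = pr r w2.
Proof.
move=> H; rewrite /pr; case: ifP => // hr; rewrite /edge_prob /=.
have -> // : #|[set i | ((w i == r) || (w i == m r)) && (w1 i == r)]| =
        #|[set i | ((w i == r) || (w i == m r)) && (w2 i == r)]|.
apply: eq_card => i; rewrite !inE; case: (boolP ((w i == r) || _)) => //= h.
by rewrite H //; apply/eqP; rewrite key_rep.
Qed.

Lemma pr_ge0 r w' : 0 <= pr r w'.
Proof.
rewrite /pr; case: ifP => // _; rewrite /edge_prob /=.
by rewrite divr_ge0 ?addr_ge0 ?mulr_ge0 ?invr_ge0 ?ler0n.
Qed.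

Lemma binom_sum r (H : nat -> R) : isrep r ->
  \sum_(w' | Pk r w') H (kk r w') = \sum_(k < #|G r|.+1) ('C(#|G r|, k))%:R * H k.
Proof.
move=> hr; have mr := negbTE (isrep_neq hr).
have GE : forall i, (i \in G r) = ((w i == r) || (w i == m r)) by move=> i; rewrite inE.
have Pk_eq : forall w', Pk r w' =
   [forall i, if i \in G r then (w' i == r) || (w' i == m r) else w' i == w i].
  move=> w'; apply: eq_forallb => i; rewrite inE -key_rep //.
  case: ifP => // ki.
  have : (w i == r) || (w i == m r) by rewrite -key_rep.
  by rewrite /okv; case/orP => /eqP ->; rewrite ?mK // orbC.
rewrite (eq_bigl _ _ Pk_eq).
pose h (B : {set Tok}) : {ffun Tok -> V} :=
  [ffun i => if i \in G r then (if i \in B then r else m r) else w i].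
pose h' (w' : {ffun Tok -> V}) := [set i in G r | w' i == r].
rewrite (reindex_onto h h'); last first.
  move=> w' /forallP H1; apply/ffunP => i; rewrite /h /h' !ffunE in_set.
  have := H1 i; case: (i \in G r) => /=; last by move/eqP.
  by case/orP=> /eqP ->; rewrite ?eqxx ?mr.
have hh : forall B, h' (h B) = G r :&: B.
  move=> B; apply/setP => i; rewrite /h /h' !in_set !ffunE !GE.
  by case: ((w i == r) || (w i == m r)); case: (i \in B); rewrite ?eqxx ?mr.
have kh : forall B, kk r (h B) = #|G r :&: B|.
  move=> B; rewrite -hh /kk /h'; apply: eq_card => i; rewrite !inE.
  by [].
rewrite (eq_bigl (fun B : {set Tok} => B \subset G r)); last first.
  move=> B; rewrite hh.
  have -> : [forall i, if i \in G r then (h B i == r) || (h B i == m r)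
                   else h B i == w i] = true.
    apply/forallP => i; rewrite /h ffunE.
    by case: (i \in G r); case: (i \in B); rewrite ?eqxx ?orbT.
  by apply/eqP/setIidPr.
rewrite (eq_bigr (fun B : {set Tok} => H #|B|)); last first.
  by move=> B /setIidPr E; rewrite kh E.
rewrite (partition_big (fun B : {set Tok} => (inord #|B| : 'I_(#|G r|.+1))) predT) //=.
apply: eq_bigr => k _.
rewrite (eq_bigl (fun B : {set Tok} => (B \subset G r) && (#|B| == k))); last first.
  move=> B; case: (boolP (B \subset G r)) => //= sB.
  rewrite -(inj_eq val_inj) /= inordK // ltnS; exact: subset_leq_card.
rewrite (eq_bigr (fun _ : {set Tok} => H k)); last by move=> B /andP [_ /eqP ->].
have E : forall k0 : nat, #|(fun B : {set Tok} => (B \subset G r) && (#|B| == k0))| = 'C(#|G r|, k0).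
  by move=> k0; rewrite -cards_draws cardsE.
by rewrite sumr_const E mulr_natl.
Qed.

Lemma edge_sum r (H : nat -> R) : isrep r ->
  \sum_(w' | Pk r w') pr r w' * H (kk r w') =
  (H (uphalf #|G r|) + H (#|G r|./2)) / 2.
Proof.
move=> hr.
pose x := #|G r|.
pose E k := (2^-1 * (k == uphalf x)%:R + 2^-1 * (k == x./2)%:R) / ('C(x, k))%:R * H k.
rewrite (eq_bigr (fun w' => E (kk r w'))); last first.
  by move=> w' _; rewrite /pr hr; reflexivity.
rewrite binom_sum //.
rewrite (eq_bigr (fun k : 'I_x.+1 => 2^-1 * ((k == uphalf x :> nat)%:R * H k)
               + 2^-1 * ((k == x./2 :> nat)%:R * H k))); last first.
  move=> k _; rewrite /E mulrA mulrCA mulfV ?mulr1; last first.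
    by rewrite pnatr_eq0 -lt0n bin_gt0 -ltnS ltn_ord.
  by rewrite mulrDl !mulrA.
rewrite big_split /= -!mulr_sumr !sum_ind; last first.
- by rewrite -[leqRHS](upfl x) leq_addr.
- by rewrite -[leqRHS](upfl x) leq_addl.
by rewrite -mulrDr mulrC.
Qed.

Lemma nonrep_sum r (Phi : {ffun Tok -> V} -> R) : ~~ isrep r ->
  \sum_(w' | Pk r w') pr r w' * Phi w' = Phi w.
Proof.
move=> hr; rewrite (big_pred1 w) /pr ?(negbTE hr) ?mul1r // => w'.
rewrite /Pk /=; apply/forallP/eqP => [H|->] .
  apply/ffunP=> i; have := H i; case: ifP => [/eqP ki|_ /eqP //].
  by rewrite /okv nonrep_fix ?ki // orbb => /eqP.
by move=> j; case: ifP => _; rewrite /okv eqxx.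
Qed.

Lemma step_factor (Phi : V -> {ffun Tok -> V} -> R) :
  (forall r (w1 w2 : {ffun Tok -> V}), (forall i, key i = r -> w1 i = w2 i) ->
     Phi r w1 = Phi r w2) ->
  \sum_w' step R m w w' * \prod_r Phi r w' =
  \prod_r \sum_(w' | Pk r w') pr r w' * Phi r w'.
Proof.
move=> Hloc.
rewrite (eq_bigr (fun w' => (if allowed w' then \prod_r pr r w' else 0) * \prod_r Phi r w')); last by move=> w' _; rewrite step_eq.
rewrite (bigID allowed) /= [X in _ + X]big1 ?addr0; last first.
  by move=> w' /negbTE ->; rewrite mul0r.
rewrite -factor; last by move=> r w1 w2 H; rewrite (pr_loc H) (Hloc _ _ _ H).
by apply: eq_bigr => w' ->; rewrite -big_split.
Qed.

Lemma key_mass r : \sum_(w' | Pk r w') pr r w' = 1.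
Proof.
case: (boolP (isrep r)) => hr.
  have := edge_sum (fun _ => 1) hr; under eq_bigr do rewrite mulr1.
  by move=> ->; rewrite half_same.
by have := nonrep_sum (fun _ => 1) hr; under eq_bigr do rewrite mulr1.
Qed.

Lemma mass : \sum_w' step R m w w' = 1.
Proof.
have H := @step_factor (fun _ _ => 1) (fun _ _ _ _ => erefl).
rewrite (eq_bigr (fun w' => step R m w w' * \prod_(r : V) (1:R))); last first.
  by move=> w' _; rewrite big1_eq mulr1.
rewrite H; apply: big1 => r _; under eq_bigr do rewrite mulr1.
exact: key_mass.
Qed.

Lemma step_ge0 w' : 0 <= step R m w w'.
Proof.
rewrite step_eq; case: allowed => //; apply: prodr_ge0 => r _; exact: pr_ge0.
Qed.

Lemma grp_other r (w' : {ffun Tok -> V}) i : isrep r -> Pk r w' -> key i == r -> w' i != r -> w' i = m r.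
Proof.
move=> hr /forallP Hw ki wr; have := Hw i; rewrite ki /okv.
have : (w i == r) || (w i == m r) by rewrite -key_rep.
case/orP=> /eqP ->; rewrite ?mK; case/orP=> /eqP // E; by rewrite E eqxx in wr.
Qed.

Lemma card1 r (w' : {ffun Tok -> V}) : isrep r ->
  #|[pred i | (key i == r) && (w' i == r)]| = kk r w'.
Proof. by move=> hr; rewrite /kk cardsE; apply: eq_card => i; rewrite !inE key_rep. Qed.

Lemma card2 r (w' : {ffun Tok -> V}) : isrep r ->
  #|[pred i | (key i == r) && (w' i != r)]| = (#|G r| - kk r w')%N.
Proof.
move=> hr.
have E1 : (#|[pred i | (key i == r) && (w' i != r)]| + kk r w')%N = #|G r|.
  rewrite -(cardID [pred i | w' i == r] (G r)) addnC; congr (_ + _).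
    by rewrite /kk cardsE; apply: eq_card => i; rewrite !inE.
  by apply: eq_card => i; rewrite !inE key_rep // andbC.
by rewrite -E1 addnK.
Qed.

Lemma grp_prod r (f : V -> R) (w' : {ffun Tok -> V}) : isrep r -> Pk r w' ->
  \prod_(i | key i == r) f (w' i) = f r ^+ kk r w' * f (m r) ^+ (#|G r| - kk r w').
Proof.
move=> hr Pw; rewrite (bigID (fun i => w' i == r)) /=.
rewrite (eq_bigr (fun _ => f r)); last by move=> i /andP [_ /eqP ->].
rewrite [X in _ * X](eq_bigr (fun _ => f (m r))); last first.
  by move=> i /andP [ki wr]; rewrite (grp_other hr Pw ki wr).
by rewrite !prod_const_pred -(card2 w' hr) -(card1 w' hr).
Qed.

Lemma grp_sum r (f : V -> R) (w' : {ffun Tok -> V}) : isrep r -> Pk r w' ->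
  \sum_(i | key i == r) f (w' i) = f r *+ kk r w' + f (m r) *+ (#|G r| - kk r w').
Proof.
move=> hr Pw; rewrite (bigID (fun i => w' i == r)) /=.
rewrite (eq_bigr (fun _ => f r)); last by move=> i /andP [_ /eqP ->].
rewrite [X in _ + X](eq_bigr (fun _ => f (m r))); last first.
  by move=> i /andP [ki wr]; rewrite (grp_other hr Pw ki wr).
by rewrite !sum_const_pred -(card2 w' hr) -(card1 w' hr).
Qed.

Lemma Pf_grp (f : V -> R) r i : isrep r -> key i == r -> Pf m f (w i) = (f r + f (m r)) / 2.
Proof.
move=> hr ki; have : (w i == r) || (w i == m r) by rewrite -key_rep.
by case/orP => /eqP ->; rewrite /Pf ?mK // addrC.
Qed.

Lemma Pf_fix (f : V -> R) i : ~~ isrep (key i) -> Pf m f (w i) = f (w i).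
Proof. by move=> h; rewrite /Pf nonrep_fix // half_same. Qed.

Lemma part_prod (F : Tok -> R) : \prod_i F i = \prod_r \prod_(i | key i == r) F i.
Proof. by rewrite (partition_big key predT). Qed.

Lemma part_sum (F : Tok -> R) : \sum_i F i = \sum_r \sum_(i | key i == r) F i.
Proof. by rewrite (partition_big key predT). Qed.

Lemma step_prod (f : V -> R) : (forall u, 0 <= f u) ->
  \sum_w' step R m w w' * \prod_i f (w' i) <= \prod_i Pf m f (w i).
Proof.
move=> f0.
rewrite (eq_bigr (fun w' => step R m w w' * \prod_r \prod_(i | key i == r) f (w' i)));
  last by move=> w' _; rewrite part_prod.
rewrite step_factor; last first.
  by move=> r w1 w2 H; apply: eq_bigr => i /eqP ki; rewrite H.
rewrite part_prod; apply: ler_prod => r _; apply/andP; split.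
  by apply: sumr_ge0 => w' _; apply: mulr_ge0; [apply: pr_ge0 | apply: prodr_ge0].
case: (boolP (isrep r)) => hr; last first.
  rewrite nonrep_sum // le_eqVlt; apply/orP; left; apply/eqP.
  by apply: eq_bigr => i /eqP ki; rewrite Pf_fix ?ki.
rewrite (eq_bigr (fun w' => pr r w' * (f r ^+ kk r w' * f (m r) ^+ (#|G r| - kk r w'))));
  last by move=> w' Pw; rewrite grp_prod.
rewrite (edge_sum (fun k => f r ^+ k * f (m r) ^+ (#|G r| - k))) //.
rewrite (eq_bigr (fun _ => (f r + f (m r)) / 2)); last by move=> i; apply: Pf_grp.
rewrite prod_const_pred.
have -> : #|(fun i => key i == r)| = #|G r| by apply: eq_card => i; rewrite [RHS]inE -key_rep.
exact: pow_ineq.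
Qed.

Lemma step_lin (g : V -> R) :
  \sum_w' step R m w w' * \sum_i g (w' i) = \sum_i Pf m g (w i).
Proof.
rewrite (eq_bigr (fun w' => \sum_r step R m w w' * \sum_(i | key i == r) g (w' i)));
  last by move=> w' _; rewrite part_sum big_distrr.
rewrite exchange_big part_sum /=; apply: eq_bigr => r0 _.
rewrite (eq_bigr (fun w' => step R m w w' *
   \prod_r (if r == r0 then \sum_(i | key i == r) g (w' i) else 1))); last first.
  move=> w' _; congr (_ * _); rewrite (bigD1 r0) //= eqxx [X in _ * X]big1 ?mulr1 //.
  by move=> r /negbTE ->.
rewrite step_factor; last first.
  move=> r w1 w2 H; case: ifP => // _.
  by apply: eq_bigr => i /eqP ki; rewrite H.
rewrite (bigD1 r0) //= [X in _ * X]big1 ?mulr1; last first.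
  by move=> r /negbTE ->; under eq_bigr do rewrite mulr1; exact: key_mass.
rewrite eqxx.
case: (boolP (isrep r0)) => hr; last first.
  by rewrite nonrep_sum //; apply: eq_bigr => i /eqP ki; rewrite Pf_fix ?ki.
rewrite (eq_bigr (fun w' => pr r0 w' * (g r0 *+ kk r0 w' + g (m r0) *+ (#|G r0| - kk r0 w'))));
  last by move=> w' Pw; rewrite grp_sum.
rewrite (edge_sum (fun k => g r0 *+ k + g (m r0) *+ (#|G r0| - k))) //.
rewrite (eq_bigr (fun _ => (g r0 + g (m r0)) / 2)); last by move=> i; apply: Pf_grp.
rewrite sum_const_pred.
have -> : #|(fun i => key i == r0)| = #|G r0| by apply: eq_card => i; rewrite [RHS]inE -key_rep.
have hx := upfl #|G r0|.
set x := #|G r0| in hx *; set c := uphalf x in hx *; set d := x./2 in hx *.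
clearbody c d; rewrite -hx addKn addnK -mulrnAl; congr (_ / _).
rewrite mulrnDr !mulrnDl.
by rewrite addrACA [RHS]addrACA [X in _ + X = _]addrC.
Qed.

End Step.


Fixpoint Qop (R : realType) (V : finType) (M : nat -> V -> V) (t1 : nat) (k : nat)
  (f : V -> R) : V -> R :=
  match k with 0 => f | k'.+1 => Qop M t1 k' (Pf (M (t1 + k'.+1)%N) f) end.

Section Main.
Variables (R : realType) (V Tok : finType) (M : nat -> V -> V) (t1 : nat).
Hypothesis mK : forall t u, M t (M t u) = u.
Variable w0 : {ffun Tok -> V}.

Lemma Qop_ext k (f g : V -> R) : (forall u, f u = g u) ->
  forall u, Qop M t1 k f u = Qop M t1 k g u.
Proof.
elim: k f g => [|k IH] f g H u //=; apply: IH => v; by rewrite /Pf !H.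
Qed.

Lemma Qop_affine k (a b : R) (g : V -> R) u :
  Qop M t1 k (fun v => a + b * g v) u = a + b * Qop M t1 k g u.
Proof.
elim: k g u => [|k IH] g u //=; rewrite -IH; apply: Qop_ext => v.
rewrite /Pf; field.
by [].
Qed.

Lemma Qop_ge0 k (f : V -> R) : (forall u, 0 <= f u) -> forall u, 0 <= Qop M t1 k f u.
Proof.
elim: k f => [|k IH] f H u //=; apply: IH => v.
by rewrite /Pf divr_ge0 ?addr_ge0.
Qed.

Lemma dist0 (F : {ffun Tok -> V} -> R) :
  \sum_w dist R M t1 w0 0 w * F w = F w0.
Proof.
rewrite /= (bigD1 w0) //= eqxx mul1r big1 ?addr0 // => w /negbTE ->.
by rewrite mul0r.
Qed.

Lemma distS k (X : {ffun Tok -> V} -> R) :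
  \sum_w' dist R M t1 w0 k.+1 w' * X w' =
  \sum_w dist R M t1 w0 k w * \sum_w' step R (M (t1 + k.+1)%N) w w' * X w'.
Proof.
rewrite /=; under eq_bigr do rewrite big_distrl.
rewrite exchange_big; apply: eq_bigr => w _; rewrite big_distrr.
by apply: eq_bigr => w' _; rewrite /= mulrA.
Qed.

Lemma dist_ge0 k w : 0 <= dist R M t1 w0 k w.
Proof.
elim: k w => [|k IH] w /=; first by case: (w == w0).
by apply: sumr_ge0 => w1 _; apply: mulr_ge0; [apply: IH | apply: step_ge0].
Qed.

Lemma dist_lin k (g : V -> R) :
  \sum_w dist R M t1 w0 k w * \sum_i g (w i) = \sum_i Qop M t1 k g (w0 i).
Proof.
elim: k g => [|k IH] g; first by rewrite dist0.
rewrite distS /= -IH; apply: eq_bigr => w _; congr (_ * _).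
exact: step_lin.
Qed.

Lemma dist_prod k (f : V -> R) : (forall u, 0 <= f u) ->
  \sum_w dist R M t1 w0 k w * \prod_i f (w i) <= \prod_i Qop M t1 k f (w0 i).
Proof.
elim: k f => [|k IH] f f0; first by rewrite dist0.
rewrite distS /=; apply: le_trans (IH _ _); last first.
  by move=> u; rewrite /Pf divr_ge0 ?addr_ge0.
apply: ler_sum => w _; apply: ler_wpM2l; first exact: dist_ge0.
exact: step_prod.
Qed.

End Main.

Unset Implicit Arguments.

Theorem lemma3p3 (R : realType) (V Tok : finType) (e : rel V)
  (e_sym : symmetric e) (e_irr : irreflexive e)
  (M : nat -> V -> V) (HM : forall t, is_matching e (M t))
  (t1 t2 : nat) (w0 : {ffun Tok -> V}) (D : {set V})
  (Ht : (t1 < t2)%N) (delta : R) (Hdelta : 0 < delta) :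
  let EZ := expectZ R M t1 w0 (t2 - t1) D in
  probZge (R:=R) M t1 w0 (t2 - t1) D ((1 + delta) * EZ)
  <= powR (expR delta / powR (1 + delta) (1 + delta)) EZ.
Proof.
cbv zeta; set EZ := expectZ R M t1 w0 (t2 - t1) D.
have mK : forall t u, M t (M t u) = u by move=> t u; case: (HM t u).
set n := (t2 - t1)%N in EZ *.
pose I (u : V) : R := (u \in D)%:R.
pose q := Qop M t1 n I.
have Zsum : forall w : {ffun Tok -> V}, ((Zcount D w)%:R : R) = \sum_i I (w i).
  move=> w; rewrite /Zcount -sum1_card natr_sum [LHS]big_mkcond /=.
  by apply: eq_bigr => i _; rewrite /I inE; case: (w i \in D).
have EZq : EZ = \sum_i q (w0 i).
  rewrite /EZ /expectZ (eq_bigr (fun w => dist R M t1 w0 n w * \sum_i I (w i))).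
    exact: dist_lin.
  by move=> w _; rewrite Zsum.
have hd : 0 < 1 + delta by lra.
set lam := ln (1 + delta).
have el : expR lam = 1 + delta by rewrite /lam lnK // posrE.
pose f (u : V) : R := expR (lam * I u).
have fE : forall u, f u = 1 + delta * I u.
  move=> u; rewrite /f /I; case: (u \in D); rewrite ?mulr1 ?mulr0 ?el ?expR0 ?addr0 //.
have f0 : forall u, 0 <= f u by move=> u; rewrite /f expR_ge0.
have Qf : forall u, Qop M t1 n f u = 1 + delta * q u.
  by move=> u; rewrite (Qop_ext _ _ _ fE) Qop_affine.
have prodZ : forall w : {ffun Tok -> V}, \prod_i f (w i) = expR (lam * (Zcount D w)%:R).
  by move=> w; rewrite Zsum mulr_sumr expR_sum.
set a := (1 + delta) * EZ.
have lam0 : 0 <= lam by rewrite /lam ln_ge0 //; lra.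
have step1 : probZge M t1 w0 n D a <=
    \sum_w dist R M t1 w0 n w * expR (lam * ((Zcount D w)%:R - a)).
  rewrite /probZge [X in _ <= X](bigID (fun w => a <= (Zcount D w)%:R)) /=.
  apply: le_trans (_ : _ <= \sum_(w | a <= (Zcount D w)%:R)
      dist R M t1 w0 n w * expR (lam * ((Zcount D w)%:R - a))) _.
    apply: ler_sum => w h; rewrite -[X in X <= _]mulr1 ler_wpM2l ?dist_ge0 //.
    apply: le_trans (expR_ge1Dx _); rewrite lerDl mulr_ge0 //; lra.
  rewrite lerDl sumr_ge0 // => w _; rewrite mulr_ge0 ?dist_ge0 ?expR_ge0 //.
have step2 : \sum_w dist R M t1 w0 n w * expR (lam * ((Zcount D w)%:R - a)) =
    expR (- (lam * a)) * \sum_w dist R M t1 w0 n w * \prod_i f (w i).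
  rewrite mulr_sumr; apply: eq_bigr => w _; rewrite prodZ mulrCA -expRD.
  by congr (_ * expR _); ring.
have step3 : \sum_w dist R M t1 w0 n w * \prod_i f (w i) <=
    \prod_i (1 + delta * q (w0 i)).
  under [X in _ <= X]eq_bigr do rewrite -Qf.
  exact: dist_prod.
have step4 : \prod_i (1 + delta * q (w0 i)) <= expR (delta * EZ).
  rewrite EZq mulr_sumr expR_sum; apply: ler_prod => i _; apply/andP; split.
    by rewrite -Qf; apply: Qop_ge0.
  by rewrite expR_ge1Dx.
apply: le_trans step1 _; rewrite step2.
apply: le_trans (ler_wpM2l (expR_ge0 _) (le_trans step3 step4)) _.
rewrite -expRD.
have pw : powR (1 + delta) (1 + delta) = expR ((1 + delta) * lam).
  by rewrite /powR gt_eqF.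
have E : expR delta / powR (1 + delta) (1 + delta) = expR (delta - (1 + delta) * lam).
  by rewrite pw expRD expRN.
rewrite E /powR gt_eqF ?expR_gt0 // expRK.
rewrite le_eqVlt; apply/orP; left; apply/eqP; congr expR.
rewrite /a; ring.
Qed.
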